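(* Let $t\ge1$ be an integer. The midpoint $Q$ of the edge of $P_t$ of slope $1$ has coordinates $(H_t,H_t/2)$; in particular the segment from the origin $O$ to $Q$ has slope $\tfrac12$. Moreover, $H_t$ is even if and only if $t$ is even.
   Context: Fix an integer $t\ge1$. Let $S_t$ be the set of rational numbers $s$ which, written in lowest terms as $s=a/b$ with $a\in\mathbb Z$ and $b$ a positive integer, satisfy $b\le t$. For $s=a/b\in S_t$ let $v_s=\lfloor t/b\rfloor\,(b,a)$, and $V_t=\{v_s:s\in S_t\}$. The grid parabola $P_t$ is the infinite convex polygonal chain obtained by concatenating the vectors of $V_t$ in order of increasing slope, positioned so that the edge given by $(t,0)$ goes from $(-t/2,0)$ to $(t/2,0)$. The horizontal period is $H_t=\sum_{(x,y)\in V_t,\ 0<y/x\le1} x=\sum_{1\le y\le x\le t,\ \gcd(x,y)=1}\lfloor t/x\rfloor\,x$. *)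

(* Defs.v *)
From mathcomp Require Import all_boot all_order all_algebra.
Set Implicit Arguments. Unset Strict Implicit. Unset Printing Implicit Defensive.
Import Order.TTheory GRing.Theory Num.Theory.
Local Open Scope ring_scope.

Definition inS (t : nat) (s : rat) : bool := (`|denq s| <= t)%N.

Definition vec (t : nat) (s : rat) : rat * rat :=
  let k := ((t %/ `|denq s|)%N)%:R : rat in
  (k * (denq s)%:~R, k * (numq s)%:~R).

(* Sum of v_r over r in S_t with lo <= r < hi (lo, hi given), for lo >= 0.
   Elements of S_t with 0 <= r are enumerated as a/b, 1 <= b <= t,
   a >= 0, coprime a b (the lowest-terms representation).  Since
   r < hi and b <= t we have a <= hi * t, so a < truncn (hi*t) + 1. *)
Definition sum_pos (t : nat) (lo hi : rat) : rat * rat :=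
  let N := (Num.truncn (hi * t%:R)).+1 in
  let P := fun (a b : nat) =>
     [&& (0 < b)%N, coprime a b, lo <= a%:R / b%:R & a%:R / b%:R < hi :> rat] in
  (\sum_(b < t.+1) \sum_(a < N | P a b) (vec t (a%:R / b%:R)).1,
   \sum_(b < t.+1) \sum_(a < N | P a b) (vec t (a%:R / b%:R)).2).

Definition sum_neg (t : nat) (lo : rat) : rat * rat :=
  let N := (Num.truncn ((- lo) * t%:R)).+1 in
  let P := fun (a b : nat) =>
     [&& (0 < b)%N, coprime a b, lo <= - (a%:R / b%:R) & - (a%:R / b%:R) < 0 :> rat] in
  (\sum_(b < t.+1) \sum_(a < N | P a b) (vec t (- (a%:R / b%:R))).1,
   \sum_(b < t.+1) \sum_(a < N | P a b) (vec t (- (a%:R / b%:R))).2).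

(* Starting point of the edge of P_t of slope s (s in S_t): the vectors of
   V_t are concatenated in increasing slope, the edge v_0 = (t,0) going
   from (-t/2,0) to (t/2,0). *)
Definition edge_start (t : nat) (s : rat) : rat * rat :=
  if 0 <= s then
    let S := sum_pos t 0 s in (- (t%:R) / 2 + S.1, S.2)
  else
    let S := sum_neg t s in (- (t%:R) / 2 - S.1, - S.2).

Definition edge_end (t : nat) (s : rat) : rat * rat :=
  ((edge_start t s).1 + (vec t s).1, (edge_start t s).2 + (vec t s).2).

Definition edge_midpoint (t : nat) (s : rat) : rat * rat :=
  (((edge_start t s).1 + (edge_end t s).1) / 2,
   ((edge_start t s).2 + (edge_end t s).2) / 2).

Definition Hper (t : nat) : nat :=
  \sum_(1 <= x < t.+1) \sum_(1 <= y < x.+1 | coprime x y) (t %/ x * x)%N.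

(* Main.v *)
Require Import Defs.
From mathcomp Require Import all_boot all_order all_algebra.
Import Order.TTheory GRing.Theory Num.Theory.
Local Open Scope ring_scope.

Lemma vec_ab t (a b : nat) : (0 < b)%N -> coprime a b ->
  vec t (a%:R / b%:R) = (((t %/ b) * b)%N%:R, ((t %/ b) * a)%N%:R).
Proof.
move=> b0 cab.
have e : (a%:R / b%:R : rat) = (a%:Z)%:~R / (b%:Z)%:~R by [].
rewrite /vec e coprimeq_den ?coprimeq_num //.
have -> : (b%:Z == 0) = false by rewrite eqz_nat; case: (b) b0.
have -> : Num.sg (b%:Z) = 1 by rewrite gtr0_sg // ltz_nat.
by rewrite mul1r !natrM.

Qed.

Definition G1 (t b : nat) := (\sum_(0 <= a < b | coprime a b) (t %/ b * b))%N.
Definition G2 (t b : nat) := (\sum_(0 <= a < b | coprime a b) (t %/ b * a))%N.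

Lemma coprimeB a b : (a <= b)%N -> coprime (b - a) b = coprime a b.
Proof.
move=> ab; rewrite /coprime.
have e1 : b = (b - a + a)%N by rewrite subnK.
have e2 : b = (a + (b - a))%N by rewrite subnKC.
by rewrite {2}e1 gcdnDl {2}e2 gcdnDl gcdnC.
Qed.

Lemma core b : (2 * \sum_(1 <= a < b | coprime a b) a =
  \sum_(1 <= a < b | coprime a b) b)%N.
Proof.
rewrite mul2n -addnn {2}(big_nat_rev _ _ 1 b) big_mkcond [X in (_ + X)%N]big_mkcond [RHS]big_mkcond -big_split /=.
apply: eq_big_nat => i /andP[i1 ib]; rewrite add1n subSS coprimeB; last exact: ltnW.
by case: (coprime i b); rewrite ?add0n // subnKC // ltnW.
Qed.

Lemma G_rel t b : (1 < b)%N -> (2 * G2 t b = G1 t b)%N.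
Proof.
move=> b1; rewrite /G1 /G2 -!big_distrr /= mulnCA; congr (_ * _)%N.
have b0 : (0 < b)%N by apply: ltn_trans b1.
rewrite big_mkcond [RHS]big_mkcond /= (big_ltn b0) (big_ltn b0).
have -> : coprime 0 b = false by rewrite /coprime gcd0n; case: (b) b1 => [|[|]].
rewrite !add0n -big_mkcond -[RHS]big_mkcond.
exact: core.
Qed.

Lemma G1_1 t : G1 t 1 = t.
Proof. by rewrite /G1 big_mkcond big_nat1 /= divn1 muln1. Qed.
Lemma G2_1 t : G2 t 1 = 0%N.
Proof. by rewrite /G2 big_mkcond big_nat1 /= muln0. Qed.

Lemma Hper_G t : Hper t = (\sum_(1 <= x < t.+1) G1 t x)%N.
Proof.
apply: eq_big_nat => x /andP[x1 _].
rewrite /G1 big_mkcond [RHS]big_mkcond /= (big_nat_recr _ _ _ x1) (big_ltn x1) /=.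
have -> : coprime x x = coprime 0 x by rewrite /coprime gcdnn gcd0n.
rewrite addnC; congr (_ + _)%N; apply: eq_big_nat => y _.
by rewrite coprime_sym.
Qed.

Lemma inner t b (F : nat -> rat) : (0 < b)%N -> (b <= t)%N ->
  \sum_(a < t.+1 | [&& (0 < b)%N, coprime a b, 0 <= a%:R / b%:R :> rat &
        a%:R / b%:R < 1 :> rat]) F a =
  \sum_(0 <= a < b | coprime a b) F a.
Proof.
move=> b0 bt.
rewrite -(big_mkord (fun a => [&& (0 < b)%N, coprime a b, 0 <= a%:R / b%:R :> rat & a%:R / b%:R < 1 :> rat])) (@big_cat_nat _ _ _ b) //=; last exact: leq_trans bt (leqnSn t).
rewrite [X in _ + X]big_nat_cond [X in _ + X]big1 ?addr0; last first.
  move=> a H; case/and5P: H => H1 _ _ _ H5.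
  move: H5; rewrite ltr_pdivrMr ?ltr0n // mul1r ltr_nat ltnNge.
  by case/andP: H1 => ->.
rewrite big_nat_cond [RHS]big_nat_cond; apply: eq_bigl => a.
case: (boolP (0 <= a < b)%N) => [/andP[_ ab]|//] /=; rewrite b0 /=.
by rewrite divr_ge0 ?ler0n //= ltr_pdivrMr ?ltr0n // mul1r ltr_nat ab !andbT.
Qed.

Lemma sum_pos_eq t : sum_pos t 0 1 =
  ((\sum_(1 <= b < t.+1) G1 t b)%N%:R, (\sum_(1 <= b < t.+1) G2 t b)%N%:R).
Proof.
rewrite /sum_pos mul1r.
have -> : Num.truncn (t%:R : rat) = t.
  by apply: truncn_def; rewrite lexx ltr_nat ltnSn.
congr pair; rewrite natr_sum big_ord_recl [X in X + _]big1 ?add0r;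
  try (by move=> a /andP[]); rewrite big_add1 big_mkord;
  apply: eq_bigr => b _; rewrite lift0.
- rewrite (@inner t b.+1 (fun a => (vec t (a%:R / b.+1%:R)).1)) // /G1 natr_sum.
  by apply: eq_bigr => a ca; rewrite vec_ab.
- rewrite (@inner t b.+1 (fun a => (vec t (a%:R / b.+1%:R)).2)) // /G2 natr_sum.
  by apply: eq_bigr => a ca; rewrite vec_ab.
Qed.

From mathcomp Require Import ring lra.

Lemma vec1 t : vec t 1 = (t%:R, t%:R).
Proof. by rewrite /vec /= divn1 mulr1. Qed.

Theorem proposition1 (t : nat) (ht : (1 <= t)%N) :
  let Q := edge_midpoint t 1 in
  [/\ Q = ((Hper t)%:R, (Hper t)%:R / 2),
      Q.2 / Q.1 = 1 / 2
    & (~~ odd (Hper t)) = (~~ odd t)].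
Proof.
set S := (\sum_(2 <= b < t.+1) G2 t b)%N.
have eA : (\sum_(1 <= b < t.+1) G1 t b = t + 2 * S)%N.
  rewrite big_ltn // G1_1 /S big_distrr /=; congr (_ + _)%N.
  by apply: eq_big_nat => b /andP[b2 _]; rewrite G_rel.
have eB : (\sum_(1 <= b < t.+1) G2 t b = S)%N.
  by rewrite big_ltn // G2_1.
have eH : Hper t = (t + 2 * S)%N by rewrite Hper_G eA.
have Qe : edge_midpoint t 1 = ((t + 2 * S)%N%:R, (t + 2 * S)%N%:R / 2).
  rewrite /edge_midpoint /edge_end /edge_start ler01 sum_pos_eq vec1 eA eB /=.
  have -> : ((t + 2 * S)%N%:R : rat) = t%:R + 2 * S%:R by rewrite natrD natrM.
  by rewrite -mulNrn; congr pair; field.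
move=> Q; rewrite /Q Qe eH /=; split => //.
- field; rewrite -natrM -natrD pnatr_eq0 addn_eq0; case: (t) ht => //.
- by rewrite oddD mul2n odd_double addbF.
Qed.
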